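(* Let $y:[0,h]\to\mathbb{R}$ solve $y'=f(y)$, $y(0)=y_0$, with $f$ Lipschitz continuous with constant $L$, and assume $f\circ y\in C^M([0,h])$. Given any previous iterate $\eta^{[p]}$, define the explicit SDC iterate by $\eta_0^{[p+1]}=\eta_0$ and, for $n=1,\dots,N$, $$\eta_n^{[p+1]}=\eta_{n-1}^{[p+1]}+h_n\big[f(\eta_{n-1}^{[p+1]})-f(\eta_{n-1}^{[p]})\big]+h\sum_{m=1}^M w_{n,m}f(\eta_m^{[p]}).$$ Then for each $n=1,\dots,N$, $$|e_n^{[p+1]}|\le e^{NhL}|e_0|+C_1h\|\mathbf e^{[p]}\|+C_2h^{M+1},$$ where $C_1,C_2$ are constants depending only on $f$, the exact solution $y$, and the selection of quadrature points.
   Context: Quadrature nodes $0\le\xi_1<\dots<\xi_M\le1$ partition $[0,1]$ into $N$ subintervals, where $N=M-1$ if both endpoints $0,1$ are nodes, $N=M$ if exactly one is, and $N=M+1$ if neither is. The right endpoints are $\xi^R_0=0$, $\xi^R_N=1$, and for the interior ones $\xi^R_n=\xi_{n+1}$ if the left endpoint $0$ is a node, $\xi^R_n=\xi_n$ otherwise. $\ell_m$ is the Lagrange basis polynomial of degree $\le M-1$ with $\ell_m(\xi_k)=\delta_{mk}$, and $w_{n,m}=\int_{\xi^R_{n-1}}^{\xi^R_n}\ell_m(x)\,dx$. For step size $h>0$, $t_n=\xi^R_nh$, $h_n=(\xi^R_n-\xi^R_{n-1})h$. The iterate $\eta^{[p]}$ consists of approximations $\eta^{[p]}_n\approx y(t_n)$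 and values $\eta^{[p]}_m\approx y(\xi_mh)$ at the quadrature nodes used in the quadrature sum. $\eta_0$ approximates $y_0$, $e_0=\eta_0-y_0$, $e^{[p+1]}_n=\eta^{[p+1]}_n-y(t_n)$, $\mathbf e^{[p]}=(\eta^{[p]}_m-y(\xi_mh))_{m=1}^M$, $\|\mathbf e\|=\max_m|e_m|$. *)

(* Defs.v *)
From Stdlib Require Import Reals Lra.
From Coquelicot Require Import Coquelicot.
Open Scope R_scope.

Fixpoint sumR (n : nat) (a : nat -> R) : R :=
  match n with O => 0 | S k => sumR k a + a k end.
Fixpoint prodR (n : nat) (a : nat -> R) : R :=
  match n with O => 1 | S k => prodR k a * a k end.
(* maxR n a = max(0, a 0, ..., a (n-1)) ; used only for nonnegative a *)
Fixpoint maxR (n : nat) (a : nat -> R) : R :=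
  match n with O => 0 | S k => Rmax (maxR k a) (a k) end.

(* Quadrature nodes are xi 1, ..., xi M (1-based, as in the paper). *)

Definition lagrange (M : nat) (xi : nat -> R) (m : nat) (x : R) : R :=
  prodR M (fun i => if Nat.eq_dec (S i) m then 1
                    else (x - xi (S i)) / (xi m - xi (S i))).

Definition num_sub (M : nat) (xi : nat -> R) : nat :=
  if Req_EM_T (xi 1%nat) 0 then
    (if Req_EM_T (xi M) 1 then (M - 1)%nat else M)
  else (if Req_EM_T (xi M) 1 then M else S M).

Definition xiR (M : nat) (xi : nat -> R) (n : nat) : R :=
  match n with
  | O => 0
  | _ => if Nat.eq_dec n (num_sub M xi) then 1
         else if Req_EM_T (xi 1%nat) 0 then xi (S n) else xi n
  end.

(* index m of the quadrature node coinciding with an interior xi^R_n *)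
Definition node_of (M : nat) (xi : nat -> R) (n : nat) : nat :=
  if Req_EM_T (xi 1%nat) 0 then S n else n.

Definition weight (M : nat) (xi : nat -> R) (n m : nat) : R :=
  RInt (lagrange M xi m) (xiR M xi (n - 1)) (xiR M xi n).

(* explicit SDC sweep: new iterate eta^{[p+1]}_n at t_n, given the previous
   iterate's values gp n ~ y(t_n) and vp m ~ y(xi_m h) at the nodes *)
Fixpoint sdc_next (f : R -> R) (h : R) (M : nat) (xi : nat -> R) (eta0 : R)
  (gp vp : nat -> R) (n : nat) : R :=
  match n with
  | O => eta0
  | S k =>
      let prev := sdc_next f h M xi eta0 gp vp k in
      prev + (xiR M xi (S k) - xiR M xi k) * h * (f prev - f (gp k))
           + h * sumR M (fun i => weight M xi (S k) (S i) * f (vp (S i)))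
  end.

Definition node_err (M : nat) (xi : nat -> R) (h : R) (vp : nat -> R) (y : R -> R) : R :=
  maxR M (fun i => Rabs (vp (S i) - y (xi (S i) * h))).

Definition CM_on (M : nat) (g : R -> R) (a b : R) : Prop :=
  exists D : nat -> R -> R,
    (forall t, a <= t <= b -> D O t = g t) /\
    (forall k t, (k < M)%nat -> a < t < b -> is_derive (D k) t (D (S k) t)) /\
    (forall k t, (k <= M)%nat -> a <= t <= b ->
       filterlim (D k) (within (fun x => a <= x <= b) (locally t)) (locally (D k t))).

(* Main.v *)
Require Import Defs.
From Stdlib Require Import Reals Lra Lia Factorial.
From Coquelicot Require Import Coquelicot.
Open Scope R_scope.

Lemma sumR_ext n a b : (forall i, (i < n)%nat -> a i = b i) -> sumR n a = sumR n b.
Proof. induction n; simpl; intros H; auto. rewrite IHn by (intros; apply H; lia). rewrite H by lia. auto. Qed.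
Lemma sumR_plus n a b : sumR n (fun i => a i + b i) = sumR n a + sumR n b.
Proof. induction n; simpl; [ring|rewrite IHn; ring]. Qed.
Lemma sumR_scal n c a : sumR n (fun i => c * a i) = c * sumR n a.
Proof. induction n; simpl; [ring|rewrite IHn; ring]. Qed.
Lemma sumR_minus n a b : sumR n (fun i => a i - b i) = sumR n a - sumR n b.
Proof. induction n; simpl; [ring|rewrite IHn; ring]. Qed.
Lemma sumR_nonneg n a : (forall i, (i < n)%nat -> 0 <= a i) -> 0 <= sumR n a.
Proof. induction n; simpl; intros H; [lra|].
  assert (0 <= sumR n a) by (apply IHn; intros; apply H; lia).
  specialize (H n ltac:(lia)). lra. Qed.
Lemma sumR_ge_term n a k : (forall i, (i < n)%nat -> 0 <= a i) -> (k < n)%nat -> a k <= sumR n a.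
Proof. induction n; simpl; intros H Hk; [lia|].
  destruct (Nat.eq_dec k n) as [->|Hne].
  - assert (0 <= sumR n a) by (apply sumR_nonneg; intros; apply H; lia). lra.
  - assert (a k <= sumR n a) by (apply IHn; [intros; apply H; lia|lia]).
    specialize (H n ltac:(lia)). lra. Qed.
Lemma sumR_abs_bound n w d X : (forall i, (i < n)%nat -> Rabs (d i) <= X) ->
  Rabs (sumR n (fun i => w i * d i)) <= sumR n (fun i => Rabs (w i)) * X.
Proof. induction n; simpl; intros H.
  - rewrite Rabs_R0. lra.
  - eapply Rle_trans; [apply Rabs_triang|].
    rewrite Rabs_mult.
    assert (H1 := IHn ltac:(intros; apply H; lia)).
    assert (H2 : Rabs (w n) * Rabs (d n) <= Rabs (w n) * X)
      by (apply Rmult_le_compat_l; [apply Rabs_pos| apply H; lia]). lra. Qed.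
Lemma sumR_delta n g k : (k < n)%nat -> (forall i, (i < n)%nat -> i <> k -> g i = 0) -> sumR n g = g k.
Proof. induction n; simpl; intros Hk H; [lia|].
  destruct (Nat.eq_dec k n) as [->|Hne].
  - rewrite (sumR_ext n g (fun _ => 0)). 2:{ intros; apply H; lia. }
    assert (Z : sumR n (fun _ => 0) = 0) by (clear; induction n; simpl; [ring| rewrite IHn; ring]).
    rewrite Z; ring.
  - rewrite IHn by (try lia; intros; apply H; lia). rewrite (H n) by lia. ring. Qed.
Lemma maxR_nonneg n a : 0 <= maxR n a.
Proof. induction n; simpl; [lra| eapply Rle_trans; [apply IHn| apply Rmax_l]]. Qed.
Lemma maxR_ge n a k : (k < n)%nat -> a k <= maxR n a.
Proof. induction n; simpl; intros Hk; [lia|].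
  destruct (Nat.eq_dec k n) as [->|Hne]; [apply Rmax_r|].
  eapply Rle_trans; [apply IHn; lia| apply Rmax_l]. Qed.

(* polynomials of degree < d *)
Fixpoint ispoly (d : nat) (p : R -> R) : Prop :=
  match d with
  | O => forall x, p x = 0
  | S d => exists a q, ispoly d q /\ forall x, p x = a + x * q x
  end.

Lemma poly_ext d p q : ispoly d p -> (forall x, p x = q x) -> ispoly d q.
Proof. destruct d; simpl.
  - intros H E x. rewrite <- E; auto.
  - intros [a [r [Hr E1]]] E. exists a, r. split; auto. intros x; rewrite <- E; auto. Qed.
Lemma poly_0 d : ispoly d (fun _ => 0).
Proof. induction d; simpl; auto. exists 0, (fun _ => 0). split; auto. intros; ring. Qed.
Lemma poly_S d p : ispoly d p -> ispoly (S d) p.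
Proof. revert p; induction d; intros p H.
  - exists 0, (fun _ => 0). split; [apply poly_0|]. intros x. simpl in H. rewrite (H x). ring.
  - destruct H as [a [q [Hq E]]]. exists a, q. split; auto. Qed.
Lemma poly_le d d' p : (d <= d')%nat -> ispoly d p -> ispoly d' p.
Proof. induction 1; auto. intros; apply poly_S; auto. Qed.
Lemma poly_plus d p q : ispoly d p -> ispoly d q -> ispoly d (fun x => p x + q x).
Proof. revert p q; induction d; simpl; intros p q Hp Hq.
  - intros x; rewrite Hp, Hq; ring.
  - destruct Hp as [a [r [Hr Er]]], Hq as [b [s [Hs Es]]].
    exists (a + b), (fun x => r x + s x). split; auto. intros x; rewrite Er, Es; ring. Qed.
Lemma poly_scal d c p : ispoly d p -> ispoly d (fun x => c * p x).
Proof. revert p; induction d; simpl; intros p Hp.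
  - intros x; rewrite Hp; ring.
  - destruct Hp as [a [r [Hr Er]]]. exists (c * a), (fun x => c * r x). split; auto.
    intros x; rewrite Er; ring. Qed.
Lemma poly_mulx d p : ispoly d p -> ispoly (S d) (fun x => x * p x).
Proof. intros H. exists 0, p. split; auto. intros; ring. Qed.
Lemma poly_const d c : ispoly (S d) (fun _ => c).
Proof. exists c, (fun _ => 0). split; [apply poly_0|]. intros; ring. Qed.
Lemma poly_mul_lin d p al be : ispoly d p -> ispoly (S d) (fun x => p x * (al * x + be)).
Proof. intros H. apply poly_ext with (fun x => al * (x * p x) + be * p x).
  - apply poly_plus; [apply poly_scal, poly_mulx; auto| apply poly_scal, poly_S; auto].
  - intros; ring. Qed.
Lemma poly_pow j : ispoly (S j) (fun x => x ^ j).
Proof. induction j. - apply poly_ext with (fun _ => 1); [apply poly_const| intros; simpl; auto]. - apply poly_ext with (fun x => x * x ^ j).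
  apply poly_mulx; auto. intros; simpl; ring. Qed.
Lemma poly_sum d k F : (forall j, (j < k)%nat -> ispoly d (F j)) -> ispoly d (fun x => sumR k (fun j => F j x)).
Proof. induction k; simpl; intros H. - apply poly_0.
  - apply poly_plus; [apply IHk; intros; apply H; lia| apply H; lia]. Qed.
Lemma poly_factor d p c : ispoly (S d) p -> exists q, ispoly d q /\ forall x, p x = p c + (x - c) * q x.
Proof. revert p; induction d; intros p [a [q [Hq E]]].
  - exists (fun _ => 0). split; [apply poly_0|]. intros x. rewrite !E, !Hq. ring.
  - destruct (IHd q Hq) as [r [Hr Er]]. exists (fun x => q c + x * r x). split.
    + exists (q c), r. split; auto.
    + intros x. rewrite !E, (Er x). ring. Qed.
Lemma poly_roots d p (z : nat -> R) : ispoly d p ->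
  (forall i j, (i < d)%nat -> (j < d)%nat -> i <> j -> z i <> z j) ->
  (forall i, (i < d)%nat -> p (z i) = 0) -> forall x, p x = 0.
Proof. revert p; induction d; intros p Hp Hz H0. - exact Hp.
  - destruct (poly_factor d p (z d) Hp) as [q [Hq E]].
    assert (Hq0 : forall x, q x = 0).
    { apply (IHd q Hq). intros; apply Hz; lia.
      intros i Hi. assert (A := H0 i ltac:(lia)). assert (B := H0 d ltac:(lia)). rewrite E, B in A.
      assert (z i - z d <> 0) by (apply Rminus_eq_contra, Hz; lia).
      rewrite Rplus_0_l in A.
      apply Rmult_integral in A. destruct A; [contradiction| auto]. }
    intros x. rewrite E, Hq0, (H0 d ltac:(lia)). ring. Qed.
Lemma poly_cont d p : ispoly d p -> forall x, continuous p x.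
Proof. revert p; induction d; simpl; intros p Hp x.
  - apply continuous_ext with (fun _ => 0); [intros; rewrite Hp; auto| apply continuous_const].
  - destruct Hp as [a [q [Hq E]]].
    apply continuous_ext with (fun x => a + x * q x); [intros; rewrite E; auto|].
    apply (@continuous_plus R_UniformSpace R_AbsRing R_NormedModule (fun _ => a) (fun x => x * q x)).
    apply continuous_const.
    apply (@continuous_mult R_UniformSpace R_AbsRing (fun x => x) q). apply continuous_id. apply IHd; auto. Qed.

Section Lag.
Variable M : nat. Variable xi : nat -> R.
Hypothesis Hmono : forall m, (1 <= m < M)%nat -> xi m < xi (S m).

Lemma xi_lt a b : (1 <= a)%nat -> (a < b)%nat -> (b <= M)%nat -> xi a < xi b.
Proof. intros Ha Hab Hb. induction Hab.
  - apply Hmono; lia.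
  - eapply Rlt_trans; [apply IHHab; lia| apply Hmono; lia]. Qed.
Lemma xi_le a b : (1 <= a)%nat -> (a <= b)%nat -> (b <= M)%nat -> xi a <= xi b.
Proof. intros. destruct (Nat.eq_dec a b) as [->|]; [lra|]. left; apply xi_lt; lia. Qed.
Lemma xi_neq i j : (i < M)%nat -> (j < M)%nat -> i <> j -> xi (S i) <> xi (S j).
Proof. intros. destruct (Nat.lt_gt_cases i j) as [[Hl|Hg] _]; auto.
  - apply Rlt_not_eq, xi_lt; lia.
  - apply not_eq_sym, Rlt_not_eq, xi_lt; lia. Qed.

Definition lagF (m : nat) (x : R) := fun i => if Nat.eq_dec (S i) m then 1
                    else (x - xi (S i)) / (xi m - xi (S i)).
Lemma lagF_S m k x : prodR (S k) (lagF m x) = prodR k (lagF m x) *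
   (if Nat.eq_dec (S k) m then 1 else (/ (xi m - xi (S k)) * x + (- xi (S k) / (xi m - xi (S k))))).
Proof. change (prodR (S k) (lagF m x)) with (prodR k (lagF m x) * lagF m x k). f_equal. unfold lagF. destruct (Nat.eq_dec (S k) m); auto. unfold Rdiv; ring. Qed.
Lemma prod_poly1 m k : ispoly (S k) (fun x : R => prodR k (lagF m x)).
Proof. induction k.
  - apply poly_ext with (fun _ => 1); [apply poly_const| intros; reflexivity].
  - apply poly_ext with (fun x => prodR k (lagF m x) *
   (if Nat.eq_dec (S k) m then 1 else (/ (xi m - xi (S k)) * x + (- xi (S k) / (xi m - xi (S k)))))); [| intros x; rewrite lagF_S; reflexivity].
    destruct (Nat.eq_dec (S k) m).
    + apply poly_ext with (fun x => prodR k (lagF m x)); [apply poly_S, IHk| intros; ring].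
    + apply poly_mul_lin; auto. Qed.
Lemma prod_poly2 m k : (1 <= m <= k)%nat -> ispoly k (fun x : R => prodR k (lagF m x)).
Proof. induction k; intros Hm; [lia|].
  apply poly_ext with (fun x => prodR k (lagF m x) *
   (if Nat.eq_dec (S k) m then 1 else (/ (xi m - xi (S k)) * x + (- xi (S k) / (xi m - xi (S k)))))); [| intros x; rewrite lagF_S; reflexivity].
  destruct (Nat.eq_dec (S k) m).
  + apply poly_ext with (fun x => prodR k (lagF m x)); [apply prod_poly1| intros; ring].
  + apply poly_mul_lin; apply IHk; lia. Qed.
Lemma lagrange_poly m : (1 <= m <= M)%nat -> ispoly M (lagrange M xi m).
Proof. intros; unfold lagrange. apply prod_poly2; auto. Qed.

Lemma prodR_one n F : (forall j, (j < n)%nat -> F j = 1) -> prodR n F = 1.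
Proof. induction n; simpl; intros H; auto. rewrite IHn, H by (try intros; try apply H; lia). ring. Qed.
Lemma prodR_zero n F k : (k < n)%nat -> F k = 0 -> prodR n F = 0.
Proof. induction n; simpl; intros Hk H; [lia|]. destruct (Nat.eq_dec k n) as [->|].
  - rewrite H; ring. - rewrite IHn by (auto; lia). ring. Qed.

Lemma lagrange_same i : (i < M)%nat -> lagrange M xi (S i) (xi (S i)) = 1.
Proof. intros Hi. unfold lagrange. apply prodR_one. intros j Hj.
  destruct (Nat.eq_dec (S j) (S i)); auto. field. apply Rminus_eq_contra, xi_neq; lia. Qed.
Lemma lagrange_diff i k : (i < M)%nat -> (k < M)%nat -> i <> k -> lagrange M xi (S i) (xi (S k)) = 0.
Proof. intros. unfold lagrange. apply prodR_zero with k; auto.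
  destruct (Nat.eq_dec (S k) (S i)); [lia|]. unfold Rdiv; ring. Qed.

Lemma lag_interp p : ispoly M p -> forall s, sumR M (fun i => lagrange M xi (S i) s * p (xi (S i))) = p s.
Proof. intros Hp s.
  assert (H : forall s, sumR M (fun i => lagrange M xi (S i) s * p (xi (S i))) - p s = 0).
  { apply (poly_roots M _ (fun i => xi (S i))).
    - apply poly_plus; [| apply poly_scal with (c := -1) in Hp; apply poly_ext with (1 := Hp); intros; ring].
      apply poly_sum. intros j Hj. apply poly_ext with (fun x => p (xi (S j)) * lagrange M xi (S j) x); [|intros; ring].
      apply poly_scal, lagrange_poly; lia.
    - intros; apply xi_neq; auto.
    - intros k Hk. rewrite (sumR_delta M _ k Hk). rewrite lagrange_same; auto; ring.
      intros i Hi Hik. rewrite lagrange_diff; auto; ring. }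
  specialize (H s). lra. Qed.
End Lag.

Definition cont_on (g : R -> R) (a b : R) : Prop :=
  forall t, a <= t <= b -> forall eps, 0 < eps -> exists del, 0 < del /\
    forall x, a <= x <= b -> Rabs (x - t) < del -> Rabs (g x - g t) < eps.

Lemma cont_on_sub g a b a' b' : cont_on g a b -> a <= a' -> b' <= b -> cont_on g a' b'.
Proof. intros H h1 h2 t Ht eps He. destruct (H t ltac:(lra) eps He) as [d [Hd Hx]].
  exists d; split; auto. intros x Hx' Hxt. apply Hx; auto; lra. Qed.

Lemma cont_on_minus g1 g2 a b : cont_on g1 a b -> cont_on g2 a b -> cont_on (fun x => g1 x - g2 x) a b.
Proof. intros H1 H2 t Ht eps He.
  destruct (H1 t Ht (eps/2) ltac:(lra)) as [d1 [Hd1 X1]].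
  destruct (H2 t Ht (eps/2) ltac:(lra)) as [d2 [Hd2 X2]].
  exists (Rmin d1 d2); split; [apply Rmin_glb_lt; auto|].
  intros x Hx Hxt. assert (A := X1 x Hx ltac:(eapply Rlt_le_trans; [apply Hxt| apply Rmin_l])).
  assert (B := X2 x Hx ltac:(eapply Rlt_le_trans; [apply Hxt| apply Rmin_r])).
  replace (g1 x - g2 x - (g1 t - g2 t)) with ((g1 x - g1 t) - (g2 x - g2 t)) by ring.
  eapply Rle_lt_trans; [apply Rabs_triang|]. rewrite Rabs_Ropp. lra. Qed.

Lemma cont_on_cont g a b : (forall x, continuous g x) -> cont_on g a b.
Proof. intros H t Ht eps He.
  destruct (proj1 (filterlim_locally g (g t)) (H t) (mkposreal eps He)) as [d Hd].
  exists d; split; [apply cond_pos|]. intros x _ Hxt. apply (Hd x Hxt). Qed.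

Lemma cont_on_within g a b : (forall t, a <= t <= b ->
     filterlim g (within (fun x => a <= x <= b) (locally t)) (locally (g t))) -> cont_on g a b.
Proof. intros H t Ht eps He.
  destruct (proj1 (filterlim_locally g (g t)) (H t Ht) (mkposreal eps He)) as [d Hd].
  exists d; split; [apply cond_pos|]. intros x Hx Hxt. apply (Hd x Hxt Hx). Qed.

Definition clamp (a b x : R) := Rmin b (Rmax a x).
Lemma clamp_in a b x : a <= b -> a <= clamp a b x <= b.
Proof. intros; unfold clamp, Rmin, Rmax; repeat destruct Rle_dec; lra. Qed.
Lemma clamp_id a b x : a <= x <= b -> clamp a b x = x.
Proof. intros; unfold clamp, Rmin, Rmax; repeat destruct Rle_dec; lra. Qed.
Lemma clamp_lip a b x z : a <= b -> Rabs (clamp a b z - clamp a b x) <= Rabs (z - x).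
Proof. intros; unfold clamp, Rmin, Rmax; repeat destruct Rle_dec;
  unfold Rabs; repeat destruct Rcase_abs; lra. Qed.

Lemma clamp_cont g a b : a <= b -> cont_on g a b -> forall x, continuous (fun z => g (clamp a b z)) x.
Proof. intros Hab H x. apply filterlim_locally. intros eps.
  destruct (H (clamp a b x) (clamp_in a b x Hab) eps (cond_pos eps)) as [d [Hd Hx]].
  exists (mkposreal d Hd). intros z Hz. change (Rabs (g (clamp a b z) - g (clamp a b x)) < eps).
  apply Hx. apply clamp_in; auto. eapply Rle_lt_trans; [apply clamp_lip; auto| apply Hz]. Qed.

Lemma mvt_bound (F F' : R -> R) a b B : a < b -> cont_on F a b ->
  (forall x, a < x < b -> is_derive F x (F' x)) -> (forall x, a < x < b -> Rabs (F' x) <= B) ->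
  Rabs (F b - F a) <= B * (b - a).
Proof. intros Hab Hc Hd HB.
  set (G := fun z => F (clamp a b z)).
  assert (HG : forall z, a <= z <= b -> G z = F z) by (intros; unfold G; rewrite clamp_id; auto).
  assert (HdG : forall x, a < x < b -> is_derive G x (F' x)).
  { intros x Hx.
    apply is_derive_ext_loc with F; [| apply Hd; auto].
    assert (Hp : 0 < Rmin (x - a) (b - x)) by (apply Rmin_glb_lt; lra).
    exists (mkposreal _ Hp). intros t Ht. change (Rabs (t - x) < Rmin (x - a) (b - x)) in Ht.
    assert (Rabs (t - x) < x - a) by (eapply Rlt_le_trans; [apply Ht| apply Rmin_l]).
    assert (Rabs (t - x) < b - x) by (eapply Rlt_le_trans; [apply Ht| apply Rmin_r]).
    apply Rabs_def2 in H. apply Rabs_def2 in H0. rewrite HG; auto; lra. }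
  set (pr1 := fun c (P : a < c < b) => exist (fun l => derivable_pt_lim G c l) (F' c)
                 (proj1 (is_derive_Reals _ _ _) (HdG c P))).
  set (pr2 := fun c (P : a < c < b) => derivable_pt_id c).
  destruct (MVT G id a b pr1 pr2 Hab) as [c [P E]].
  - intros x _. apply continuity_pt_filterlim. apply clamp_cont; auto; lra.
  - intros x _. apply derivable_continuous_pt, derivable_pt_id.
  - unfold pr2 in E. rewrite derive_pt_id in E. simpl in E. unfold id in E.
    rewrite <- !HG by lra. replace (G b - G a) with ((b - a) * F' c) by lra.
    rewrite Rabs_mult, Rabs_right by lra. rewrite Rmult_comm.
    apply Rmult_le_compat_r; [lra| apply HB; auto]. Qed.

Lemma mvt_bound_abs (F F' : R -> R) lo hi a b B : lo <= a <= hi -> lo <= b <= hi -> cont_on F lo hi ->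
  (forall x, lo < x < hi -> is_derive F x (F' x)) -> (forall x, lo < x < hi -> Rabs (F' x) <= B) ->
  Rabs (F b - F a) <= B * Rabs (b - a).
Proof. intros Ha Hb Hc Hd HB.
  destruct (Rtotal_order a b) as [Hl|[He|Hg]].
  - rewrite (Rabs_right (b - a)) by lra. apply mvt_bound with F'; auto.
    apply cont_on_sub with lo hi; auto; lra. intros; apply Hd; lra. intros; apply HB; lra.
  - subst. rewrite !Rminus_diag, Rabs_R0. lra.
  - rewrite <- Rabs_Ropp, (Rabs_left (b - a)) by lra. replace (- (F b - F a)) with (F a - F b) by ring.
    replace (B * - (b - a)) with (B * (a - b)) by ring.
    apply mvt_bound with F'; auto.
    apply cont_on_sub with lo hi; auto; lra. intros; apply Hd; lra. intros; apply HB; lra. Qed.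

Lemma cont_bounded g a b : a <= b -> cont_on g a b -> exists K, forall t, a <= t <= b -> Rabs (g t) <= K.
Proof. intros Hab Hc.
  destruct (continuity_ab_maj (fun z => Rabs (g (clamp a b z))) a b Hab) as [m [Hm _]].
  - intros c _. apply continuity_pt_filterlim.
    apply (continuous_comp (fun z => g (clamp a b z)) Rabs). apply clamp_cont; auto.
    apply continuity_pt_filterlim, Rcontinuity_abs.
  - exists (Rabs (g (clamp a b m))). intros t Ht. specialize (Hm t Ht). simpl in Hm.
    rewrite clamp_id in Hm; auto. Qed.

Definition tay (c : nat -> R) (n : nat) (t : R) := sumR n (fun j => c j * t ^ j / INR (fact j)).

Lemma tay_ext c d n t : (forall j, c j = d j) -> tay c n t = tay d n t.
Proof. intros H; unfold tay; apply sumR_ext; intros; rewrite H; auto. Qed.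

Lemma tay_0 c n : tay c (S n) 0 = c 0%nat.
Proof. induction n. - unfold tay; simpl; field. - unfold tay in *. change (sumR (S n) (fun j => c j * 0 ^ j / INR (fact j)) + c (S n) * 0 ^ (S n) / INR (fact (S n)) = c 0%nat).
  rewrite IHn. simpl. unfold Rdiv; ring. Qed.

Lemma mono_derive a n t : is_derive (fun t => a * t ^ (S n) / INR (fact (S n))) t (a * t ^ n / INR (fact n)).
Proof. auto_derive; auto.
  change (match n with 0%nat => 1 | S _ => INR n + 1 end) with (INR (S n)).
  change (fact n + n * fact n)%nat with (S n * fact n)%nat. rewrite mult_INR.
  assert (INR (fact n) <> 0) by apply INR_fact_neq_0. rewrite S_INR in *.
  assert (INR n + 1 <> 0) by (pose proof (pos_INR n); lra). field; auto. Qed.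

Lemma tay_derive c n t : is_derive (tay c (S n)) t (tay (fun j => c (S j)) n t).
Proof. revert t; induction n; intros t.
  - apply is_derive_ext with (fun _ => c 0%nat). intros; unfold tay; simpl; field.
    apply (is_derive_const (K:=R_AbsRing) (V:=R_NormedModule) (c 0%nat) t).
  - apply is_derive_ext with (fun t => tay c (S n) t + c (S n) * t ^ (S n) / INR (fact (S n))).
    intros; reflexivity.
    replace (tay (fun j => c (S j)) (S n) t) with (tay (fun j => c (S j)) n t + c (S n) * t ^ n / INR (fact n)) by reflexivity.
    apply (@is_derive_plus R_AbsRing R_NormedModule (tay c (S n)) (fun t => c (S n) * t ^ (S n) / INR (fact (S n)))).
    apply IHn. apply mono_derive. Qed.

Lemma tay_cont c n x : continuous (tay c n) x.
Proof. destruct n. - apply continuous_ext with (fun _ => 0). intros; reflexivity. apply continuous_const.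
  - apply (@ex_derive_continuous R_AbsRing R_NormedModule). eexists; apply tay_derive. Qed.

Lemma taylor_err (G : nat -> R -> R) (n : nat) (T K : R) : 0 < T ->
  (forall k t, (k < n)%nat -> 0 < t < T -> is_derive (G k) t (G (S k) t)) ->
  (forall k, (k <= n)%nat -> cont_on (G k) 0 T) ->
  (forall t, 0 <= t <= T -> Rabs (G n t) <= K) ->
  forall i k, (k + i = n)%nat -> forall t, 0 <= t <= T ->
    Rabs (G k t - tay (fun j => G (k + j)%nat 0) i t) <= K * t ^ i.
Proof. intros HT Hd Hc HK.
  assert (K0 : 0 <= K) by (eapply Rle_trans; [apply Rabs_pos| apply (HK 0); lra]).
  induction i; intros k Hki t Ht.
  - replace k with n by lia. unfold tay; simpl. rewrite Rminus_0_r, Rmult_1_r. apply HK; auto.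
  - set (F := fun s => G k s - tay (fun j => G (k + j)%nat 0) (S i) s).
    set (F' := fun s => G (S k) s - tay (fun j => G (S k + j)%nat 0) i s).
    assert (F0 : F 0 = 0).
    { unfold F. rewrite tay_0, Nat.add_0_r. ring. }
    destruct (Req_dec t 0) as [->|Ht0].
    { change (Rabs (F 0) <= K * 0 ^ S i). rewrite F0, Rabs_R0. simpl. lra. }
    change (Rabs (F t) <= K * t ^ S i). rewrite <- (Rminus_0_r (F t)), <- F0 at 1.
    replace (K * t ^ S i) with (K * t ^ i * (t - 0)) by (simpl; ring).
    apply mvt_bound with F'.
    + lra.
    + apply cont_on_sub with 0 T; try lra. unfold F. apply cont_on_minus. apply Hc; lia.
      apply cont_on_cont; apply tay_cont.
    + intros x Hx. unfold F, F'.
      apply (@is_derive_minus R_AbsRing R_NormedModule (G k) (tay (fun j => G (k + j)%nat 0) (S i))).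
      apply Hd; [lia| lra].
      rewrite (tay_ext (fun j => G (S k + j)%nat 0) (fun j => G (k + S j)%nat 0)).
      apply (tay_derive (fun j => G (k + j)%nat 0)). intros j; rewrite Nat.add_succ_r; reflexivity.
    + intros x Hx. unfold F'. eapply Rle_trans. apply IHi; [lia| lra].
      apply Rmult_le_compat_l; auto. apply pow_incr; lra. Qed.

Section Quad.
Variable M : nat. Variable xi : nat -> R.
Hypothesis Hmono : forall m, (1 <= m < M)%nat -> xi m < xi (S m).

Lemma lag_cont i x : (i < M)%nat -> continuous (lagrange M xi (S i)) x.
Proof. intros; apply poly_cont with M. apply lagrange_poly; auto; lia. Qed.

Lemma sum_RInt (C : nat -> R) a b k : (k <= M)%nat ->
  is_RInt (fun s => sumR k (fun i => lagrange M xi (S i) s * C i)) a b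
          (sumR k (fun i => RInt (lagrange M xi (S i)) a b * C i)).
Proof. induction k; intros Hk.
  - pose proof (@is_RInt_const R_NormedModule a b zero) as H0. simpl. assert (E : scal (b - a) (@zero R_NormedModule) = 0) by (apply (@scal_zero_r R_Ring)). rewrite E in H0. exact H0.
  - apply (@is_RInt_plus R_NormedModule (fun s => sumR k (fun i => lagrange M xi (S i) s * C i))
       (fun s => lagrange M xi (S k) s * C k)). apply IHk; lia.
    assert (E2 : forall u v : R, @scal R_Ring (NormedModule.ModuleSpace R_AbsRing R_NormedModule) u v = v * u)
      by (intros; unfold scal; simpl; unfold mult; simpl; ring).
    assert (H := @is_RInt_scal R_NormedModule (lagrange M xi (S k)) a b (C k) _
        (RInt_correct _ _ _ (ex_RInt_continuous _ _ _ (fun z _ => lag_cont k z ltac:(lia))))).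
    rewrite E2 in H. eapply is_RInt_ext; [| exact H]. intros; simpl; rewrite E2; reflexivity. Qed.

Lemma tay_poly d h : ispoly M (fun s => h * tay d M (s * h)).
Proof. apply poly_scal. apply poly_ext with (fun s => sumR M (fun j => (d j * h ^ j / INR (fact j)) * s ^ j)).
  - apply poly_sum. intros j Hj. apply poly_scal. apply poly_le with (S j); [lia| apply poly_pow].
  - intros s. unfold tay. apply sumR_ext. intros. rewrite Rpow_mult_distr. unfold Rdiv; ring. Qed.

Lemma quad_exact (d : nat -> R) h a b :
  sumR M (fun i => RInt (lagrange M xi (S i)) a b * (h * tay (fun j => d (S j)) M (xi (S i) * h)))
  = tay d (S M) (b * h) - tay d (S M) (a * h).
Proof.
  assert (H1 := sum_RInt (fun i => h * tay (fun j => d (S j)) M (xi (S i) * h)) a b M (le_n _)).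
  assert (H2 : is_RInt (fun s => h * tay (fun j => d (S j)) M (s * h)) a b
                 (minus (tay d (S M) (b * h)) (tay d (S M) (a * h)))).
  { apply (is_RInt_derive (fun s => tay d (S M) (s * h))).
    - intros x _. apply (is_derive_comp (tay d (S M)) (fun s => s * h)). apply tay_derive.
      auto_derive; auto; ring.
    - intros x _. apply poly_cont with M. apply tay_poly. }
  apply is_RInt_ext with (g := fun s => sumR M (fun i => lagrange M xi (S i) s * (h * tay (fun j => d (S j)) M (xi (S i) * h)))) in H2.
  - apply (@is_RInt_unique R_CompleteNormedModule) in H1. apply (@is_RInt_unique R_CompleteNormedModule) in H2. simpl in H1, H2. rewrite <- H1, H2. reflexivity.
  - intros x _. symmetry. apply (lag_interp M xi Hmono (fun s => h * tay (fun j => d (S j)) M (s * h))).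
    apply tay_poly. Qed.
End Quad.

Lemma abs4 a b c d : Rabs (a + b + c - d) <= Rabs a + Rabs b + Rabs c + Rabs d.
Proof. unfold Rminus. eapply Rle_trans; [apply Rabs_triang|]. rewrite Rabs_Ropp.
  eapply Rle_trans; [apply Rplus_le_compat_r, Rabs_triang|].
  eapply Rle_trans; [apply Rplus_le_compat_r, Rplus_le_compat_r, Rabs_triang|]. lra. Qed.

Lemma sdc_S f h M xi eta0 gp vp k : sdc_next f h M xi eta0 gp vp (S k) =
  sdc_next f h M xi eta0 gp vp k + (xiR M xi (S k) - xiR M xi k) * h *
     (f (sdc_next f h M xi eta0 gp vp k) - f (gp k))
  + h * sumR M (fun i => weight M xi (S k) (S i) * f (vp (S i))).
Proof. reflexivity. Qed.

Lemma node_facts M xi n : (1 <= M)%nat -> (1 <= n < num_sub M xi)%nat ->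
  xiR M xi n = xi (node_of M xi n) /\ (1 <= node_of M xi n <= M)%nat.
Proof. intros HM Hn. unfold xiR, node_of, num_sub in *.
  destruct n as [|n]; [lia|].
  destruct (Req_EM_T (xi 1%nat) 0); destruct (Req_EM_T (xi M) 1);
  (destruct (Nat.eq_dec (S n) _); [lia|]); split; auto; lia. Qed.

Lemma xiR_in M xi n : (1 <= M)%nat -> (forall k, (1 <= k <= M)%nat -> 0 <= xi k <= 1) ->
  (n <= num_sub M xi)%nat -> 0 <= xiR M xi n <= 1.
Proof. intros HM Hx Hn. destruct n as [|n]. { simpl; lra. }
  destruct (Nat.eq_dec (S n) (num_sub M xi)) as [E|E].
  - unfold xiR. rewrite <- E. destruct (Nat.eq_dec (S n) (S n)); [lra| congruence].
  - destruct (node_facts M xi (S n) HM ltac:(lia)) as [-> H]. apply Hx; auto. Qed.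

Theorem corollary3 (f : R -> R) (L : R) (M : nat) (xi : nat -> R)
  (T : R) (y : R -> R) :
  (forall u v, Rabs (f u - f v) <= L * Rabs (u - v)) ->
  (1 <= M)%nat -> 0 <= xi 1%nat -> xi M <= 1 ->
  (forall m, (1 <= m < M)%nat -> xi m < xi (S m)) ->
  0 < T ->
  (forall t, 0 <= t <= T ->
     filterlim y (within (fun x => 0 <= x <= T) (locally t)) (locally (y t))) ->
  (forall t, 0 < t < T -> is_derive y t (f (y t))) ->
  CM_on M (fun t => f (y t)) 0 T ->
  exists C1 C2 : R,
    forall (h eta0 : R) (gp vp : nat -> R),
      0 < h <= T ->
      (gp O = eta0 \/ (xi 1%nat = 0 /\ gp O = vp 1%nat)) ->
      (forall n, (1 <= n < num_sub M xi)%nat -> gp n = vp (node_of M xi n)) ->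
      forall n, (1 <= n <= num_sub M xi)%nat ->
        Rabs (sdc_next f h M xi eta0 gp vp n - y (xiR M xi n * h))
        <= exp (INR (num_sub M xi) * h * L) * Rabs (eta0 - y 0)
           + C1 * h * node_err M xi h vp y + C2 * h ^ (S M).
Proof.
  intros HL HM Hx1 HxM Hmono HT Hyc Hyd [D [D0 [Dd Dc]]].
  set (N := num_sub M xi).
  assert (L0 : 0 <= L).
  { specialize (HL 1 0). rewrite Rminus_0_r, Rabs_R1, Rmult_1_r in HL.
    eapply Rle_trans; [apply Rabs_pos| exact HL]. }
  set (G := fun k => match k with O => y | S k => D k end).
  assert (HdG : forall k t, (k < S M)%nat -> 0 < t < T -> is_derive (G k) t (G (S k) t)).
  { intros [|k] t Hk Ht; simpl.
    - rewrite D0 by lra. apply Hyd; auto.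
    - apply Dd; [lia| auto]. }
  assert (HcG : forall k, (k <= S M)%nat -> cont_on (G k) 0 T).
  { intros [|k] Hk; apply cont_on_within; simpl; auto. intros; apply Dc; auto; lia. }
  destruct (cont_bounded (G (S M)) 0 T ltac:(lra) (HcG _ (le_n _))) as [K HK].
  assert (K0 : 0 <= K) by (eapply Rle_trans; [apply Rabs_pos| apply (HK 0); lra]).
  assert (TE := taylor_err G (S M) T K HT HdG HcG HK).
  set (Pf := tay (fun j => G (S j) 0) M).
  set (Qf := tay (fun j => G j 0) (S M)).
  assert (E1 : forall s, 0 <= s <= T -> Rabs (D 0%nat s - Pf s) <= K * s ^ M).
  { intros s Hs. exact (TE M 1%nat eq_refl s Hs). }
  assert (Hxin : forall k, (1 <= k <= M)%nat -> 0 <= xi k <= 1).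
  { intros k Hk. split.
    - eapply Rle_trans; [apply Hx1| apply (xi_le M xi Hmono); lia].
    - apply Rle_trans with (xi M); [apply (xi_le M xi Hmono); lia| apply HxM]. }
  set (W := sumR N (fun k => sumR M (fun i => Rabs (weight M xi (S k) (S i))))).
  assert (Wk : forall k, (k < N)%nat -> sumR M (fun i => Rabs (weight M xi (S k) (S i))) <= W).
  { intros k Hk. apply (sumR_ge_term N (fun k => sumR M (fun i => Rabs (weight M xi (S k) (S i))))); auto.
    intros; apply sumR_nonneg; intros; apply Rabs_pos. }
  assert (W0 : 0 <= W) by (apply sumR_nonneg; intros; apply sumR_nonneg; intros; apply Rabs_pos).
  set (A := exp (INR N * T * L)).
  exists (A * INR N * (L + W * L)), (A * INR N * (K * (1 + W))).
  intros h eta0 gp vp Hh Hg0 Hgn.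
  set (E := node_err M xi h vp y).
  assert (E0 : 0 <= E) by apply maxR_nonneg.
  assert (nodeE : forall i, (i < M)%nat -> Rabs (vp (S i) - y (xi (S i) * h)) <= E).
  { intros i Hi. apply (maxR_ge M (fun i => Rabs (vp (S i) - y (xi (S i) * h)))); auto. }
  set (e := fun k => sdc_next f h M xi eta0 gp vp k - y (xiR M xi k * h)).
  assert (e0 : e 0%nat = eta0 - y 0) by (unfold e; simpl; rewrite Rmult_0_l; reflexivity).
  set (B := h * L * E + h * W * L * E + K * (1 + W) * h ^ (S M)).
  assert (STEP : forall k, (k < N)%nat -> Rabs (e (S k)) <= (1 + h * L) * Rabs (e k) + B).
  { intros k Hk.
    assert (Ha : 0 <= xiR M xi k <= 1) by (apply xiR_in; auto; lia).
    assert (Hb : 0 <= xiR M xi (S k) <= 1) by (apply xiR_in; auto; lia).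
    set (a := xiR M xi k) in *. set (b := xiR M xi (S k)) in *.
    set (etak := sdc_next f h M xi eta0 gp vp k).
    set (X1 := (b - a) * h * (f etak - f (gp k))).
    set (X2 := h * sumR M (fun i => weight M xi (S k) (S i) * (f (vp (S i)) - f (y (xi (S i) * h))))).
    set (rho := y (b * h) - y (a * h) - h * sumR M (fun i => weight M xi (S k) (S i) * f (y (xi (S i) * h)))).
    assert (EQ : e (S k) = e k + X1 + X2 - rho).
    { unfold e, X1, X2, rho. rewrite sdc_S. fold a b etak.
      assert (SE : sumR M (fun i => weight M xi (S k) (S i) * (f (vp (S i)) - f (y (xi (S i) * h))))
        = sumR M (fun i => weight M xi (S k) (S i) * f (vp (S i))) - sumR M (fun i => weight M xi (S k) (S i) * f (y (xi (S i) * h))))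
        by (rewrite <- sumR_minus; apply sumR_ext; intros; ring).
      rewrite SE. ring. }
    assert (LIP : Rabs (f etak - f (gp k)) <= L * (Rabs (e k) + E)).
    { destruct k as [|k].
      - unfold etak. simpl sdc_next. rewrite e0. destruct Hg0 as [G0|[X G0]]; rewrite G0.
        + rewrite Rminus_diag, Rabs_R0. apply Rmult_le_pos; auto. pose proof (Rabs_pos (eta0 - y 0)); lra.
        + eapply Rle_trans; [apply HL|]. apply Rmult_le_compat_l; auto.
          assert (N0 := nodeE 0%nat ltac:(lia)). rewrite X, Rmult_0_l in N0.
          replace (eta0 - vp 1%nat) with ((eta0 - y 0) - (vp 1%nat - y 0)) by ring.
          eapply Rle_trans; [apply Rabs_triang|]. rewrite Rabs_Ropp. lra.
      - destruct (node_facts M xi (S k) HM ltac:(lia)) as [Xa Hnd].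
        rewrite (Hgn (S k) ltac:(lia)).
        destruct (node_of M xi (S k)) as [|i] eqn:Enode; [lia|].
        eapply Rle_trans; [apply HL|]. apply Rmult_le_compat_l; auto.
        assert (N0 := nodeE i ltac:(lia)).
        unfold e. unfold a in *. rewrite Xa. fold etak.
        replace (etak - vp (S i)) with ((etak - y (xi (S i) * h)) - (vp (S i) - y (xi (S i) * h))) by ring.
        eapply Rle_trans; [apply Rabs_triang|]. rewrite Rabs_Ropp. lra. }
    assert (BX1 : Rabs X1 <= h * (L * (Rabs (e k) + E))).
    { unfold X1. rewrite !Rabs_mult, (Rabs_right h) by lra.
      assert (Rabs (b - a) <= 1) by (apply Rabs_le; lra).
      rewrite Rmult_assoc. rewrite (Rmult_comm (Rabs (b - a))). rewrite Rmult_assoc.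
      apply Rmult_le_compat_l; [lra|].
      rewrite <- (Rmult_1_r (L * (Rabs (e k) + E))).
      apply Rmult_le_compat; auto; apply Rabs_pos. }
    assert (BX2 : Rabs X2 <= h * W * L * E).
    { unfold X2. rewrite Rabs_mult, (Rabs_right h) by lra. rewrite !Rmult_assoc.
      apply Rmult_le_compat_l; [lra|].
      apply Rle_trans with (sumR M (fun i => Rabs (weight M xi (S k) (S i))) * (L * E)).
      - apply sumR_abs_bound. intros i Hi. eapply Rle_trans; [apply HL|]. apply Rmult_le_compat_l; auto.
      - apply Rmult_le_compat_r; [apply Rmult_le_pos; auto| apply Wk; auto]. }
    assert (Brho : Rabs rho <= K * (1 + W) * h ^ (S M)).
    { assert (wq : forall i, weight M xi (S k) (S i) = RInt (lagrange M xi (S i)) a b).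
      { intros; unfold weight, a, b. replace (S k - 1)%nat with k by lia. reflexivity. }
      assert (quad := quad_exact M xi Hmono (fun j => G j 0) h a b).
      fold Pf Qf in quad.
      assert (ZB : Rabs ((y (b * h) - Qf (b * h)) - (y (a * h) - Qf (a * h))) <= K * h ^ M * Rabs (b * h - a * h)).
      { apply (mvt_bound_abs (fun s => y s - Qf s) (fun s => D 0%nat s - Pf s) 0 h).
        - split; [apply Rmult_le_pos; lra| rewrite <- (Rmult_1_l h) at 2; apply Rmult_le_compat_r; lra].
        - split; [apply Rmult_le_pos; lra| rewrite <- (Rmult_1_l h) at 2; apply Rmult_le_compat_r; lra].
        - apply cont_on_sub with 0 T; try lra. apply cont_on_minus. apply (HcG 0%nat); lia.
          apply cont_on_cont. apply tay_cont.
        - intros x Hx. apply (@is_derive_minus R_AbsRing R_NormedModule y Qf).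
          apply (HdG 0%nat x); [lia| lra]. apply tay_derive.
        - intros x Hx. eapply Rle_trans; [apply E1; lra|]. apply Rmult_le_compat_l; auto.
          apply pow_incr; lra. }
      assert (HbA : Rabs (b * h - a * h) <= h).
      { replace (b * h - a * h) with ((b - a) * h) by ring. rewrite Rabs_mult, (Rabs_right h) by lra.
        rewrite <- (Rmult_1_l h) at 2. apply Rmult_le_compat_r; [lra|]. apply Rabs_le; lra. }
      set (Er := fun i => f (y (xi (S i) * h)) - Pf (xi (S i) * h)).
      assert (BEr : forall i, (i < M)%nat -> Rabs (Er i) <= K * h ^ M).
      { intros i Hi. unfold Er. assert (Hxi := Hxin (S i) ltac:(lia)).
        assert (0 <= xi (S i) * h <= h) by (split; [apply Rmult_le_pos; lra| rewrite <- (Rmult_1_l h) at 2; apply Rmult_le_compat_r; lra]).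
        rewrite <- D0 by lra. eapply Rle_trans; [apply E1; lra|]. apply Rmult_le_compat_l; auto.
        apply pow_incr; lra. }
      assert (DEC : h * sumR M (fun i => weight M xi (S k) (S i) * f (y (xi (S i) * h)))
         = sumR M (fun i => RInt (lagrange M xi (S i)) a b * (h * Pf (xi (S i) * h)))
           + h * sumR M (fun i => weight M xi (S k) (S i) * Er i)).
      { rewrite <- !sumR_scal, <- sumR_plus. apply sumR_ext. intros i _. rewrite wq. unfold Er. ring. }
      assert (BS : Rabs (h * sumR M (fun i => weight M xi (S k) (S i) * Er i)) <= h * W * (K * h ^ M)).
      { rewrite Rabs_mult, (Rabs_right h) by lra. rewrite Rmult_assoc.
        apply Rmult_le_compat_l; [lra|].
        apply Rle_trans with (sumR M (fun i => Rabs (weight M xi (S k) (S i))) * (K * h ^ M)).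
        apply sumR_abs_bound; auto.
        apply Rmult_le_compat_r; [apply Rmult_le_pos; auto; apply pow_le; lra| apply Wk; auto]. }
      assert (RE : rho = ((y (b * h) - Qf (b * h)) - (y (a * h) - Qf (a * h))) - h * sumR M (fun i => weight M xi (S k) (S i) * Er i)).
      { unfold rho. rewrite DEC. unfold Pf, Qf in *. rewrite quad. ring. }
      rewrite RE. unfold Rminus at 1. eapply Rle_trans; [apply Rabs_triang|]. rewrite Rabs_Ropp.
      assert (K * h ^ M * Rabs (b * h - a * h) <= K * h ^ M * h).
      { apply Rmult_le_compat_l; auto. apply Rmult_le_pos; auto. apply pow_le; lra. }
      change (h ^ S M) with (h * h ^ M). nra. }
    rewrite EQ. eapply Rle_trans; [apply abs4|]. unfold B. nra. }
  assert (INV : forall k, (k <= N)%nat -> Rabs (e k) <= exp (INR k * h * L) * (Rabs (e 0%nat) + INR k * B)).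
  { assert (B0 : 0 <= B).
    { unfold B. assert (0 <= h ^ S M) by (apply pow_le; lra).
      assert (0 <= h * L * E) by (repeat apply Rmult_le_pos; lra).
      assert (0 <= h * W * L * E) by (repeat apply Rmult_le_pos; lra).
      assert (0 <= K * (1 + W) * h ^ S M) by (apply Rmult_le_pos; [apply Rmult_le_pos; lra| assumption]). lra. }
    induction k; intros Hk.
    - simpl. rewrite !Rmult_0_l, exp_0. lra.
    - specialize (IHk ltac:(lia)). specialize (STEP k ltac:(lia)).
      rewrite S_INR. replace ((INR k + 1) * h * L) with (INR k * h * L + h * L) by ring.
      rewrite exp_plus.
      set (u := exp (INR k * h * L)) in *. set (v := exp (h * L)).
      set (Y := Rabs (e 0%nat) + INR k * B) in *.
      assert (hL : 0 <= h * L) by (apply Rmult_le_pos; lra).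
      assert (Hv : 1 + h * L <= v) by apply exp_ineq1_le.
      assert (Hu : 1 <= u).
      { unfold u. eapply Rle_trans; [| apply exp_ineq1_le].
        assert (0 <= INR k * h * L) by (repeat apply Rmult_le_pos; try apply pos_INR; lra). lra. }
      assert (HY : 0 <= Y) by (unfold Y; assert (0 <= INR k * B) by (apply Rmult_le_pos; [apply pos_INR| lra]);
                                 pose proof (Rabs_pos (e 0%nat)); lra).
      assert (A1 : (1 + h * L) * Rabs (e k) <= (1 + h * L) * (u * Y)) by (apply Rmult_le_compat_l; lra).
      assert (A2 : (1 + h * L) * (u * Y) <= v * (u * Y)) by (apply Rmult_le_compat_r; [apply Rmult_le_pos|]; lra).
      assert (A3 : 1 <= u * v) by nra.
      assert (A4 : B <= u * v * B) by nra.
      replace (u * v * (Rabs (e 0%nat) + (INR k + 1) * B)) with (v * (u * Y) + u * v * B) by (unfold Y; ring).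
      lra. }
  assert (B0 : 0 <= B).
  { unfold B. assert (0 <= h ^ S M) by (apply pow_le; lra).
    assert (0 <= h * L * E) by (repeat apply Rmult_le_pos; lra).
    assert (0 <= h * W * L * E) by (repeat apply Rmult_le_pos; lra).
    assert (0 <= K * (1 + W) * h ^ S M) by (apply Rmult_le_pos; [apply Rmult_le_pos; lra| assumption]). lra. }
  intros n Hn. change (Rabs (e n) <= exp (INR N * h * L) * Rabs (eta0 - y 0)
           + A * INR N * (L + W * L) * h * E + A * INR N * (K * (1 + W)) * h ^ (S M)).
  assert (I := INV n ltac:(lia)). rewrite e0 in I.
  assert (exp_le : forall a b, a <= b -> exp a <= exp b).
  { intros a b Hab. destruct (Req_dec a b) as [->|]; [lra| left; apply exp_increasing; lra]. }
  assert (Hn1 : INR n <= INR N) by (apply le_INR; lia).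
  assert (Hn0 : 0 <= INR n) by apply pos_INR.
  assert (X1 : exp (INR n * h * L) <= exp (INR N * h * L)).
  { apply exp_le. apply Rmult_le_compat_r; auto. apply Rmult_le_compat_r; lra. }
  assert (X2 : exp (INR n * h * L) <= A).
  { apply exp_le. apply Rmult_le_compat_r; auto. apply Rmult_le_compat; lra. }
  assert (X3 : exp (INR n * h * L) * (INR n * B) <= A * (INR N * B)).
  { apply Rmult_le_compat; try lra. pose proof (exp_pos (INR n * h * L)); lra.
    apply Rmult_le_pos; lra. apply Rmult_le_compat_r; lra. }
  assert (X4 : exp (INR n * h * L) * Rabs (eta0 - y 0) <= exp (INR N * h * L) * Rabs (eta0 - y 0)).
  { apply Rmult_le_compat_r; auto. apply Rabs_pos. }
  replace (exp (INR N * h * L) * Rabs (eta0 - y 0) + A * INR N * (L + W * L) * h * E + A * INR N * (K * (1 + W)) * h ^ (S M))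
    with (exp (INR N * h * L) * Rabs (eta0 - y 0) + A * (INR N * B)) by (unfold B; ring).
  rewrite Rmult_plus_distr_l in I. lra.
Qed.
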